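(* Fix an integer $r\ge 4$. For every integer $n\ge 33$, there exists a $K_{1,r}$-free graph $G$ of order $n$ with no isolated vertices and $\chi(G)=2$ such that \[ f_o(G)<\frac{|V(G)|}{\chi(G)}=\frac{n}{2}. \] Specifically, writing $n=9k+4\ell$ with integers $k\ge 1$, $\ell\ge 0$, one may take $G=kF\cup \ell C_4$, where $F$ is the bipartite graph with vertex set $\{a,b,c,d,u,v,w,x,y\}$ and edge set $\{au,ax,ay,bv,bw,bx,cu,cv,cy,du,dw,dx\}$, and $f_o(G)=4k+2\ell$.
   Context: All graphs are finite and simple. An induced subgraph of a graph $G$ is called odd if every vertex of it has odd degree in it. $f_o(G)$ denotes the maximum order of an odd induced subgraph of $G$. A graph is $K_{1,r}$-free if it contains no induced subgraph isomorphic to $K_{1,r}$. $\chi(G)$ is the chromatic number. $kF\cup\ell C_4$ denotes the vertex-disjoint union of $k$ copies of $F$ and $\ell$ copies of the $4$-cycle $C_4$. *)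

(* Defs.v *)
From mathcomp Require Import all_boot.
Set Implicit Arguments. Unset Strict Implicit. Unset Printing Implicit Defensive.

Section Graphs.
Variable T : finType.

Definition simple_graph (e : rel T) : Prop := symmetric e /\ irreflexive e.

Definition odd_induced (e : rel T) (S : {set T}) : bool :=
  [forall v in S, odd #|[set u in S | e v u]|].

Definition f_o (e : rel T) : nat :=
  \max_(S : {set T} | odd_induced e S) #|S|.

Definition has_induced_star (e : rel T) (r : nat) : bool :=
  [exists v, exists S : {set T},
     [&& S \subset [set u | e v u], #|S| == r &
         [forall x in S, forall y in S, ~~ e x y]]].

Definition K1r_free (e : rel T) (r : nat) : Prop := ~~ has_induced_star e r.

Definition no_isolated (e : rel T) : Prop := forall v, exists u, e v u.

Definition colorable (e : rel T) (k : nat) : Prop :=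
  exists f : T -> 'I_k, forall x y, e x y -> f x != f y.

Definition chromatic_number (e : rel T) (k : nat) : Prop :=
  colorable e k /\ forall j, j < k -> ~ colorable e j.

End Graphs.

(* Main.v *)
Require Import Defs.
From mathcomp Require Import all_boot zify.
Set Implicit Arguments. Unset Strict Implicit.

Definition fadjn (a b : nat) : bool :=
  match a, b with
  | 0,4 | 0,7 | 0,8 | 1,5 | 1,6 | 1,7 | 2,4 | 2,5 | 2,8 | 3,4 | 3,6 | 3,7 => true
  | 4,0 | 7,0 | 8,0 | 5,1 | 6,1 | 7,1 | 4,2 | 5,2 | 8,2 | 4,3 | 6,3 | 7,3 => true
  | _,_ => false end.
Definition cadjn (a b : nat) : bool :=
  match a, b with
  | 0,1 | 1,0 | 1,2 | 2,1 | 2,3 | 3,2 | 3,0 | 0,3 => true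
  | _,_ => false end.

Lemma localF (b : nat -> bool) :
  all (fun v => b v ==> odd (count (fun u => b u && fadjn v u) (iota 0 9))) (iota 0 9) ->
  count b (iota 0 9) <= 4.
Proof.
rewrite /=.
move: (b 0) (b 1) (b 2) (b 3) (b 4) (b 5) (b 6) (b 7) (b 8) => [] [] [] [] [] [] [] [] []; by [].
Qed.

Lemma localC (b : nat -> bool) :
  all (fun v => b v ==> odd (count (fun u => b u && cadjn v u) (iota 0 4))) (iota 0 4) ->
  count b (iota 0 4) <= 2.
Proof.
rewrite /=.
move: (b 0) (b 1) (b 2) (b 3) => [] [] [] []; by [].
Qed.

Lemma fadjn_sym a b : fadjn a b = fadjn b a.
Proof.
by case: a => [|[|[|[|[|[|[|[|[|a]]]]]]]]]; case: b => [|[|[|[|[|[|[|[|[|b]]]]]]]]].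
Qed.
Lemma cadjn_sym a b : cadjn a b = cadjn b a.
Proof.
by case: a => [|[|[|[|a]]]]; case: b => [|[|[|[|b]]]].
Qed.
Lemma fadjn_col a b : fadjn a b -> (a < 4) != (b < 4).
Proof.
by case: a => [|[|[|[|[|[|[|[|[|a]]]]]]]]]; case: b => [|[|[|[|[|[|[|[|[|b]]]]]]]]].
Qed.
Lemma cadjn_col a b : cadjn a b -> odd a != odd b.
Proof.
by case: a => [|[|[|[|a]]]]; case: b => [|[|[|[|b]]]].
Qed.
Lemma fdeg a : count (fadjn a) (iota 0 9) <= 3.
Proof. by case: a => [|[|[|[|[|[|[|[|[|a]]]]]]]]]. Qed.
Lemma cdeg a : count (cadjn a) (iota 0 4) <= 3.
Proof. by case: a => [|[|[|[|a]]]]. Qed.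
Definition fpart (a : nat) : nat :=
  match a with 0 => 4 | 1 => 5 | 2 => 4 | 3 => 4 | 4 => 0 | 5 => 1 | 6 => 1 | _ => 0 end.
Lemma fpart_lt a : fpart a < 9.
Proof. by case: a => [|[|[|[|[|[|[|[|[|a]]]]]]]]]. Qed.
Lemma fpart_adj a : a < 9 -> fadjn a (fpart a).
Proof. by case: a => [|[|[|[|[|[|[|[|[|a]]]]]]]]]. Qed.
Definition cpart (a : nat) : nat := match a with 0 => 1 | 1 => 2 | 2 => 3 | _ => 0 end.
Lemma cpart_lt a : cpart a < 4.
Proof. by case: a => [|[|[|[|a]]]]. Qed.
Lemma cpart_adj a : a < 4 -> cadjn a (cpart a).
Proof. by case: a => [|[|[|[|a]]]]. Qed.

Lemma card_iota m (P : pred nat) : #|[set x : 'I_m | P x]| = count P (iota 0 m).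
Proof.
rewrite -sum1_card -val_enum_ord count_map -sum1_count.
rewrite big_enum_cond /=. apply: eq_bigl => x; by rewrite inE.
Qed.

Section Gen.
Variables (V : finType) (e : rel V) (m c : nat) (adj : nat -> nat -> bool).
Variable emb : 'I_m -> V.
Hypothesis emb_inj : injective emb.
Hypothesis Hnb : forall x u, e (emb x) u -> exists y, u = emb y.
Hypothesis Hadj : forall x y, e (emb x) (emb y) = adj x y.

Lemma gen_deg x : #|[set u | e (emb x) u]| <= count (adj x) (iota 0 m).
Proof.
rewrite -card_iota.
apply: leq_trans (subset_leq_card _) (leq_imset_card emb _).
apply/subsetP => u; rewrite inE => H.
have [y Ey] := Hnb H; subst u.
by apply/imsetP; exists y; rewrite // inE -Hadj.
Qed.

Hypothesis Hloc : forall b : nat -> bool,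
  all (fun v => b v ==> odd (count (fun u => b u && adj v u) (iota 0 m))) (iota 0 m) ->
  count b (iota 0 m) <= c.

Lemma gen_slice (S : {set V}) : odd_induced e S -> #|[set a : 'I_m | emb a \in S]| <= c.
Proof.
move=> /forall_inP HS.
case: m emb emb_inj Hnb Hadj Hloc => [|m'] emb' inj' Hnb' Hadj' Hloc'.
  by apply: leq_trans (max_card _) _; rewrite card_ord.
set B := [set a : 'I_m'.+1 | emb' a \in S].
have -> : #|B| = #|[set x : 'I_m'.+1 | (fun n => inord n \in B) x]|.
  by apply: eq_card => x; rewrite !inE inord_val.
rewrite (card_iota _ (fun n => inord n \in B)); apply: Hloc'.
apply/allP => v; rewrite mem_iota => /andP[_ hv]; apply/implyP => hb.
have vx : v = (inord v : 'I_m'.+1) by rewrite inordK.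
have := HS (emb' (inord v)); rewrite inE in hb => /(_ hb).
rewrite -card_iota.
rewrite (_ : [set u in S | e (emb' (inord v)) u] =
             emb' @: [set y : 'I_m'.+1 | (inord y \in B) && adj v y]) ?card_imset //.
apply/setP => u; rewrite !inE; apply/idP/idP.
  case/andP => uS /[dup] eu /Hnb' [y Ey]; subst u.
  apply/imsetP; exists y => //.
  by rewrite !inE inord_val uS /= vx -Hadj'.
case/imsetP => y; rewrite !inE inord_val => /andP[yS ad] ->.
by rewrite yS Hadj' -vx.
Qed.
End Gen.
Set Implicit Arguments. Unset Strict Implicit.

Notation TT k l := ('I_k * 'I_9 + 'I_l * 'I_4)%type.
Section Constr.
Variables k l : nat.
Definition eT : rel (TT k l) := fun x y => match x, y with
 | inl p, inl q => (p.1 == q.1) && fadjn p.2 q.2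
 | inr p, inr q => (p.1 == q.1) && cadjn p.2 q.2
 | _, _ => false end.

Definition embL (i : 'I_k) : 'I_9 -> TT k l := fun a => inl (i, a).
Definition embR (i : 'I_l) : 'I_4 -> TT k l := fun a => inr (i, a).
Lemma embL_inj i : injective (embL i). Proof. by move=> x y [->]. Qed.
Lemma embR_inj i : injective (embR i). Proof. by move=> x y [->]. Qed.
Lemma embL_nb i x u : eT (embL i x) u -> exists y, u = embL i y.
Proof. by case: u => [[j y]|//] /andP[/eqP /= <- _]; exists y. Qed.
Lemma embR_nb i x u : eT (embR i x) u -> exists y, u = embR i y.
Proof. by case: u => [//|[j y]] /andP[/eqP /= <- _]; exists y. Qed.
Lemma embL_adj i x y : eT (embL i x) (embL i y) = fadjn x y.
Proof. by rewrite /= eqxx. Qed.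
Lemma embR_adj i x y : eT (embR i x) (embR i y) = cadjn x y.
Proof. by rewrite /= eqxx. Qed.

Lemma eT_sym : symmetric eT.
Proof. case=> [[i a]|[i a]] [[j b]|[j b]] //=; first by rewrite eq_sym fadjn_sym.
by rewrite eq_sym cadjn_sym. Qed.
Lemma eT_irr : irreflexive eT.
Proof. by case=> [[i [[|[|[|[|[|[|[|[|[|a]]]]]]]]] ?]]|[i [[|[|[|[|a]]]] ?]]] /=; rewrite ?andbF. Qed.

Lemma eT_deg v : #|[set u | eT v u]| <= 3.
Proof.
case: v => [[i a]|[i a]].
  exact: leq_trans (gen_deg (@embL_nb i) (@embL_adj i) a) (fdeg a).
exact: leq_trans (gen_deg (@embR_nb i) (@embR_adj i) a) (cdeg a).
Qed.

Lemma eT_noiso v : exists u, eT v u.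
Proof.
case: v => [[i a]|[i a]].
  by exists (inl (i, Ordinal (fpart_lt a))); rewrite /= eqxx fpart_adj.
by exists (inr (i, Ordinal (cpart_lt a))); rewrite /= eqxx cpart_adj.
Qed.

Definition colT (x : TT k l) : bool := match x with inl p => p.2 < 4 | inr p => odd p.2 end.
Lemma colT_ok x y : eT x y -> colT x != colT y.
Proof.
case: x y => [[i a]|[i a]] [[j b]|[j b]] //= /andP[_ H].
  exact: fadjn_col.
exact: cadjn_col.
Qed.

Lemma eT_fo S : odd_induced eT S -> #|S| <= 4 * k + 2 * l.
Proof.
move=> HS.
have E : #|S| = \sum_(i < k) #|[set a | embL i a \in S]| + \sum_(i < l) #|[set a | embR i a \in S]|.
  rewrite -sum1_card big_sumType /=.
  congr (_ + _).
    under [RHS]eq_bigr => i _ do rewrite -sum1_card.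
    rewrite pair_big_dep /=; apply: eq_bigl => [[i a]]; by rewrite inE.
  under [RHS]eq_bigr => i _ do rewrite -sum1_card.
  rewrite pair_big_dep /=; apply: eq_bigl => [[i a]]; by rewrite inE.
rewrite E mulnC [2 * l]mulnC; apply: leq_add.
  rewrite -[k in k * 4]card_ord -sum_nat_const; apply: leq_sum => i _.
  exact: (gen_slice (@embL_inj i) (@embL_nb i) (@embL_adj i) localF HS).
rewrite -[l in l * 2]card_ord -sum_nat_const; apply: leq_sum => i _.
exact: (gen_slice (@embR_inj i) (@embR_nb i) (@embR_adj i) localC HS).
Qed.
End Constr.
Unset Implicit Arguments. Set Strict Implicit.

Theorem theorem2p6 (r : nat) (hr : 4 <= r) (n : nat) (hn : 33 <= n) :
  exists e : rel 'I_n,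
    [/\ simple_graph e, K1r_free e r, no_isolated e,
        chromatic_number e 2 & 2 * f_o e < n].
Proof.
have [k [l [Hk Hn]]] : exists k l, 0 < k /\ n = 9*k + 4*l.
  have := divn_eq n 4; have := ltn_pmod n (isT : 0 < 4).
  move: (n %/ 4) (n %% 4) => q [|[|[|[|m]]]] // _ En.
  - by exists 4, (q - 9); split => //; lia.
  - by exists 1, (q - 2); split => //; lia.
  - by exists 2, (q - 4); split => //; lia.
  - by exists 3, (q - 6); split => //; lia.
have Hc : n = #|{: TT k l}| by rewrite card_sum !card_prod !card_ord; lia.
pose g : 'I_n -> TT k l := fun x => enum_val (cast_ord Hc x).
pose h : TT k l -> 'I_n := fun y => cast_ord (esym Hc) (enum_rank y).
have gK : cancel g h by move=> x; rewrite /g /h enum_valK cast_ordK.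
have hK : cancel h g by move=> y; rewrite /g /h cast_ordKV enum_rankK.
have n0 : 0 < n by lia.
exists (fun x y => eT (g x) (g y)); split.
- split => [x y | x] /=; [exact: eT_sym | exact: eT_irr].
- apply/negP => /existsP [v /existsP [S /and3P [sub /eqP cS _]]].
  suff : r <= 3 by lia.
  rewrite -cS; apply: leq_trans (subset_leq_card sub) _.
  rewrite -(card_imset _ (can_inj gK)).
  apply: leq_trans (subset_leq_card _) (eT_deg (g v)).
  apply/subsetP => w /imsetP [u]; rewrite inE => H ->; by rewrite inE.
- by move=> v; have [u H] := eT_noiso (g v); exists (h u); rewrite hK.
- split.
    exists (fun x => if colT (g x) then (ord0 : 'I_2) else ord_max).
    by move=> x y /colT_ok; case: (colT (g x)); case: (colT (g y)).
  move=> j hj [f Hf].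
  pose v : 'I_n := Ordinal n0.
  have [u H] := eT_noiso (g v).
  have := Hf v (h u); rewrite hK => /(_ H).
  case: j hj f Hf => [|[|//]] _ f _.
    by case: (f v).
  by rewrite !ord1 eqxx.
- apply: (@leq_ltn_trans (2 * (4 * k + 2 * l))); last by lia.
  rewrite leq_mul2l; apply/orP; right.
  apply/bigmax_leqP => S /forall_inP HS.
  rewrite -(card_imset _ (can_inj gK)); apply: eT_fo.
  apply/forall_inP => w /imsetP [x xS ->].
  have := HS x xS.
  rewrite (_ : [set u in g @: S | eT (g x) u] = g @: [set u in S | eT (g x) (g u)]).
    by rewrite card_imset //; apply: can_inj gK.
  apply/setP => u; rewrite inE; apply/andP/imsetP.
    by case=> /imsetP [y yS ->] H; exists y; rewrite // inE yS H.
  by case=> y; rewrite inE => /andP [yS H] ->; split; [exact: imset_f | exact H].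
Qed.
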